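(* Let $c>0$ and let $\boldsymbol\rho=(\rho_j)_{j\ge1}$ be a nonnegative sequence. Let $(\mathbb A_{\boldsymbol\nu,\lambda})_{\boldsymbol\nu\in\mathscr F,\lambda\in\mathbb N_0}$ be real numbers with $\mathbb A_{\boldsymbol\nu,0}=\delta_{\boldsymbol\nu,\boldsymbol 0}$, $\mathbb A_{\boldsymbol\nu,\lambda}=0$ for $\lambda>|\boldsymbol\nu|$, and otherwise $$\mathbb A_{\boldsymbol\nu+\boldsymbol e_j,\lambda}\le\sum_{\boldsymbol m\le\boldsymbol\nu}\binom{\boldsymbol\nu}{\boldsymbol m}c\,\boldsymbol\rho^{\boldsymbol\nu-\boldsymbol m+\boldsymbol e_j}(|\boldsymbol\nu|-|\boldsymbol m|+2)!\,\mathbb A_{\boldsymbol m,\lambda-1},\qquad j\ge1.$$ Then for all $\boldsymbol\nu\ne\boldsymbol0$ and $1\le\lambda\le|\boldsymbol\nu|$, $$\mathbb A_{\boldsymbol\nu,\lambda}\le c^\lambda\boldsymbol\rho^{\boldsymbol\nu}\sum_{k=1}^\lambda\frac{(-1)^{\lambda+k}(|\boldsymbol\nu|+2k-1)!}{(2k-1)!\,(\lambda-k)!\,k!}.$$ Moreover, if both inequalities in the recursion are replaced by equalities, then the conclusion holds with equality.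
   Context: $\mathscr F$ is the set of finitely supported multi-indices $\boldsymbol\nu\in\mathbb N_0^{\mathbb N}$, $|\boldsymbol\nu|=\sum_j\nu_j$, $\boldsymbol e_j$ is the $j$-th unit multi-index, $\boldsymbol m\le\boldsymbol\nu$ means $m_j\le\nu_j$ for all $j$, $\binom{\boldsymbol\nu}{\boldsymbol m}=\prod_j\binom{\nu_j}{m_j}$, $\boldsymbol\rho^{\boldsymbol\nu}=\prod_j\rho_j^{\nu_j}$, and $\delta$ is the Kronecker delta. *)

(* Defs.v *)
(* Multi-indices are finite sequences of naturals without
   trailing zeros (canonical representatives of finitely supported
   multi-indices); coordinate j (0-based) of nu is nth 0 nu j. *)
From mathcomp Require Import all_boot all_order all_algebra.
Set Implicit Arguments. Unset Strict Implicit. Unset Printing Implicit Defensive.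
Import Order.TTheory GRing.Theory Num.Theory.

Fixpoint trim (s : seq nat) : seq nat :=
  match s with
  | [::] => [::]
  | a :: t => let t' := trim t in
              if (a == 0%N) && (t' == [::]) then [::] else a :: t'
  end.

Definition canon (s : seq nat) : bool := last 1%N s != 0%N.

Lemma trim_canon s : canon (trim s).
Proof.
rewrite /canon; elim: s => [|a t IH] //=.
move: IH; case: (trim t) => [|b u] /= IH; first by case: a.
by rewrite andbF /=.
Qed.

Definition mi := {s : seq nat | canon s}.

Definition mk (s : seq nat) : mi := exist _ (trim s) (trim_canon s).

(* nu_j  (0-based index j stands for the paper's coordinate j+1) *)
Definition coord (nu : mi) (j : nat) : nat := nth 0%N (sval nu) j.

Definition mabs (nu : mi) : nat := sumn (sval nu).

Definition mzero : mi := mk [::].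

Definition addE (nu : mi) (j : nat) : mi := mk (incr_nth (sval nu) j).

(* nu - m (coordinatewise; used only when m <= nu) *)
Definition msub (nu m : mi) : mi :=
  mk [seq (coord nu i - coord m i)%N | i <- iota 0 (maxn (size (sval nu)) (size (sval m)))].

Definition mle (m nu : mi) : Prop := forall j, (coord m j <= coord nu j)%N.

Fixpoint below (s : seq nat) : seq (seq nat) :=
  match s with
  | [::] => [:: [::]]
  | a :: t => [seq i :: u | i <- iota 0 a.+1, u <- below t]
  end.

(* the list of all multi-indices m <= nu, each exactly once *)
Definition mbelow (nu : mi) : seq mi := map mk (below (sval nu)).

Definition mbinom (nu m : mi) : nat :=
  (\prod_(j < maxn (size (sval nu)) (size (sval m))) 'C(coord nu j, coord m j))%N.

Local Open Scope ring_scope.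

Definition mpow {R : comRingType} (rho : nat -> R) (nu : mi) : R :=
  \prod_(j < size (sval nu)) rho j ^+ coord nu j.

(* Main.v *)
Require Import Defs.
From mathcomp Require Import all_boot all_order all_algebra.
From mathcomp Require Import zify ring.
Require Import Defs.
Set Implicit Arguments. Unset Strict Implicit. Unset Printing Implicit Defensive.
Import Order.TTheory GRing.Theory Num.Theory.

Lemma I1 (m n p : nat) :
  \sum_(i < n.+1) 'C(n - i + p, p) * 'C(i + m - 1, i) = 'C(n + m + p, n).
Proof.
elim: n p => [|n IHn] p.
  by rewrite big_ord1 /= !bin0 subnn add0n binn.
elim: p => [|p IHp].
  rewrite big_ord_recr /= bin0 mul1n addn0.
  rewrite (eq_bigr (fun i : 'I_n.+1 => 'C(i + m - 1, i))); last by move=> i _; rewrite bin0 mul1n.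
  have H0 := IHn 0%N.
  rewrite (eq_bigr (fun i : 'I_n.+1 => 'C(i + m - 1, i))) in H0; last by move=> i _; rewrite bin0 mul1n.
  rewrite H0 !addn0.
  have -> : (n.+1 + m - 1 = n + m)%N by lia.
  by rewrite [(n.+1 + m)%N]addSn binS addnC.
rewrite big_ord_recr /= subnn add0n binn mul1n.
rewrite (eq_bigr (fun i : 'I_n.+1 => 'C(n - i + p.+1, p.+1) * 'C(i + m - 1, i)
      + 'C(n - i + p.+1, p) * 'C(i + m - 1, i))); last first.
  move=> i _; have Hi := ltn_ord i.
  have -> : (n.+1 - i + p.+1 = (n - i + p.+1).+1)%N by lia.
  by rewrite binS mulnDl.
rewrite big_split /= IHn -addnA.
have := IHp; rewrite big_ord_recr /= subnn add0n binn mul1n.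
rewrite (eq_bigr (fun i : 'I_n.+1 => 'C(n - i + p.+1, p) * 'C(i + m - 1, i))); last first.
  move=> i _; have Hi := ltn_ord i.
  by have -> : (n.+1 - i + p = n - i + p.+1)%N by lia.
move=> ->.
have -> : (n.+1 + m + p.+1 = (n + m + p.+1).+1)%N by lia.
rewrite binS addnC; congr (_ + _); congr 'C(_, _); lia.
Qed.

Local Open Scope ring_scope.

Definition HH (R : numFieldType) (l i : nat) : R :=
  (i`!)%:R / (l`!)%:R *
  \sum_(k < l.+1) ('C(l, k))%:R * (-1) ^+ (l - k) * ('C(i + 2 * k - 1, i))%:R.

Lemma fact_neq0 (R : numFieldType) n : (n`!)%:R != 0 :> R.
Proof. by rewrite pnatr_eq0 -lt0n fact_gt0. Qed.

Lemma natid1 (n i : nat) : (i <= n)%N ->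
  ('C(n, i) * (n - i + 2)`! * i`! = 2 * n`! * 'C(n - i + 2, 2))%N.
Proof.
move=> Hi.
have e1 := bin_fact (n := (n - i + 2)%N) (m := 2%N) (leq_addl _ _).
have e2 := bin_fact Hi.
rewrite -e2 -e1 addnK /=.
set a := 'C(n, i); set b := 'C(_, 2); set c := i`!; set d := (n - i)`!.
have -> : (2`! = 2)%N by []. clearbody a b c d; clear e1 e2 Hi. nia.
Qed.

Lemma natid2 (n l k : nat) :
  ((n.+1)`! * l`! * 'C(l.+1, k.+1) * 'C(n + 2 * k + 2, n.+1) =
   2 * n`! * (l.+1)`! * 'C(l, k) * 'C(n + 2 * k + 2, n))%N.
Proof.
have e1 := mul_bin_left (n + 2 * k + 2) n.
have e2 := mul_bin_diag l.+1 k.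
rewrite /= in e2.
rewrite (_ : (n + 2 * k + 2 - n = 2 * k.+1)%N) in e1; last by lia.
rewrite !factS.
set A := 'C(l.+1, k.+1) in e2 *; set B := 'C(n + 2 * k + 2, n.+1) in e1 *.
set C := 'C(l, k) in e2 *; set D := 'C(n + 2 * k + 2, n) in e1 *.
set a := n`!; set b := l`!. clearbody a b A B C D.
transitivity (a * b * A * (n.+1 * B))%N; first by ring.
rewrite e1; transitivity (2 * a * b * D * (k.+1 * A))%N; first by ring.
rewrite -e2; ring.
Qed.

Lemma KI (R : numFieldType) (l n : nat) :
  \sum_(i < n.+1) ('C(n, i))%:R * (((n - i + 2)`!)%:R * HH R l i) = HH R l.+1 n.+1.
Proof.
rewrite /HH.
transitivity (\sum_(i < n.+1) (2 * (n`!)%:R / (l`!)%:R) *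
   \sum_(k < l.+1) ('C(l, k))%:R * (-1) ^+ (l - k) *
      (('C(n - i + 2, 2))%:R * ('C(i + 2 * k - 1, i))%:R) :> R).
  apply: eq_big => // i _; have Hi : (i <= n)%N by rewrite -ltnS.
  rewrite !mulr_sumr.
  apply: eq_bigr => k _.
  have := natid1 Hi => /(congr1 (fun x => x%:R : R)).
  rewrite !natrM => E.
  have f := fact_neq0 R l.

  transitivity (('C(n, i))%:R * (((n - i + 2)`!)%:R * (i`!)%:R) / (l`!)%:R *
     (('C(l, k))%:R * (-1) ^+ (l - k) * ('C(i + 2 * k - 1, i))%:R) :> R).
    by field.
  by rewrite mulrA E; field.
rewrite -mulr_sumr exchange_big /=.
transitivity (2 * (n`!)%:R / (l`!)%:R * \sum_(k < l.+1) ('C(l, k))%:R * (-1) ^+ (l - k) *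
     ('C(n + 2 * k + 2, n))%:R :> R).
  congr (_ * _); apply: eq_bigr => k _; rewrite -mulr_sumr; congr (_ * _).
  rewrite -(I1 (2 * k) n 2) natr_sum; apply: eq_bigr => i _; by rewrite natrM.
rewrite [in RHS]big_ord_recl /= (_ : (n.+1 + 2 * 0 - 1 = n)%N); last by lia.
rewrite (bin_small (ltnSn n)) mulr0 add0r !mulr_sumr; apply: eq_bigr => k _.
rewrite /bump leq0n add1n subSS.
rewrite (_ : (n.+1 + 2 * k.+1 - 1 = n + 2 * k + 2)%N); last by lia.
have E : ((n.+1)`!)%:R * (l`!)%:R * ('C(l.+1, k.+1))%:R * ('C(n + 2 * k + 2, n.+1))%:R =
   2 * (n`!)%:R * ((l.+1)`!)%:R * ('C(l, k))%:R * ('C(n + 2 * k + 2, n))%:R :> R.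
  by rewrite -!natrM natid2.
have f1 := fact_neq0 R l; have f2 := fact_neq0 R l.+1.
set s := (-1) ^+ _.
apply: (mulIf f1); apply: (mulIf f2).
transitivity (s * (2 * (n`!)%:R * ((l.+1)`!)%:R * ('C(l, k))%:R *
  ('C(n + 2 * k + 2, n))%:R)); first by field.
by rewrite -E; field.
Qed.

Lemma HH0 (R : numFieldType) i : HH R 0 i = (i == 0%N)%:R.
Proof.
rewrite /HH big_ord1 /= fact0 divr1 bin0 expr0 !mul1r muln0 addn0.
case: i => [|i]; first by rewrite fact0 bin0 mulr1.
by rewrite subn1 /= bin_small ?mulr0.
Qed.

Lemma HHS0 (R : numFieldType) l : HH R l.+1 0 = 0.
Proof.
rewrite /HH.
rewrite (eq_bigr (fun k : 'I_l.+2 => (-1) ^+ (l.+1 - k) * 1 ^+ k *+ 'C(l.+1, k) : R)).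
  by rewrite -exprDn addNr expr0n /= mulr0.
move=> k _; by rewrite bin0 mulr1 expr1n mulr1 mulr_natl.
Qed.

Lemma HHvanish (R : numFieldType) l n : (n < l)%N -> HH R l n = 0.
Proof.
elim: l n => [|l IH] n //.
case: n => [|n] Hn; first exact: HHS0.
rewrite -KI big1 // => i _.
rewrite IH ?mulr0 ?mul0r //.
have := ltn_ord i; lia.
Qed.

Lemma HHrhs (R : numFieldType) l n : (0 < n)%N ->
  HH R l n = \sum_(1 <= k < l.+1)
      (-1) ^+ (l + k) * ((n + 2 * k - 1)`!)%:R /
      (((2 * k - 1)`!)%:R * ((l - k)`!)%:R * (k`!)%:R).
Proof.
move=> Hn.
rewrite /HH big_ord_recl /= (bin_small (n := (n + 2 * 0 - 1)%N) (m := n)) ?mulr0 ?add0r; last by lia.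
rewrite big_add1 /= big_mkord mulr_sumr; apply: eq_bigr => k _.
rewrite /bump leq0n add1n.
have Hk : (k.+1 <= l)%N by have := ltn_ord k.
set K := k.+1.
have E1 := bin_fact Hk.
have E2 := bin_fact (leq_addr (2 * K - 1) n).
rewrite (_ : (n + 2 * K - 1 = n + (2 * K - 1))%N); last by lia.
rewrite addKn in E2.
rewrite -E2 -E1 !natrM.
have -> : (-1) ^+ (l + K) = (-1) ^+ (l - K) :> R.
  rewrite (_ : (l + K = (l - K) + K * 2)%N); last by lia.
  by rewrite exprD exprM sqrr_sign mulr1.
have c1 : ('C(l, K))%:R != 0 :> R by rewrite pnatr_eq0 -lt0n bin_gt0.
have := fact_neq0 R K; have := fact_neq0 R (l - K); have := fact_neq0 R n;
have := fact_neq0 R (2 * K - 1).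
move=> f1 f2 f3 f4.
field; apply/and5P; split => //; first exact: (fact_neq0 R k).
by rewrite addrC natr1 pnatr_eq0.
Qed.

Import Order.TTheory GRing.Theory Num.Theory.

Lemma trim_nth s j : nth 0%N (trim s) j = nth 0%N s j.
Proof.
elim: s j => [|a t IH] j //=.
case: ifP => [/andP[/eqP -> /eqP Ht] | _].
  case: j => [|j] //=; by rewrite -IH Ht nth_nil.
by case: j.
Qed.

Lemma trim_sumn s : sumn (trim s) = sumn s.
Proof.
elim: s => [|a t IH] //=.
case: ifP => [/andP[/eqP -> /eqP Ht] | _] /=; last by rewrite IH.
by rewrite -IH Ht.
Qed.

Lemma trim_size s : (size (trim s) <= size s)%N.
Proof.
elim: s => [|a t IH] //=.
by case: ifP => _ //=.
Qed.

Lemma coord_mk s j : coord (mk s) j = nth 0%N s j.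
Proof. exact: trim_nth. Qed.

Lemma mabs_mk s : mabs (mk s) = sumn s.
Proof. exact: trim_sumn. Qed.

Lemma canon_size (x : mi) N : (forall i, (N <= i)%N -> coord x i = 0%N) ->
  (size (sval x) <= N)%N.
Proof.
case: x => s cs; rewrite /coord /= => H.
case: (leqP (size s) N) => // Hlt.
have := H (size s).-1; rewrite nth_last => H'.
move: cs H' Hlt; rewrite /canon; case: s H => [|a t] //= _ /eqP cs H' Hlt.
exfalso; apply: cs; apply: H'; lia.
Qed.

Lemma mi_ext (a b : mi) : (forall j, coord a j = coord b j) -> a = b.
Proof.
move=> H.
have Hs : size (sval a) = size (sval b).
  apply/eqP; rewrite eqn_leq; apply/andP; split; apply: canon_size => i Hi.
    by rewrite H /coord nth_default.
  by rewrite -H /coord nth_default.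
case: a b H Hs => s cs [t ct] /= H Hs.
have E : s = t by apply: (eq_from_nth (x0 := 0%N) Hs) => i _; exact: H.
subst t; congr exist; exact: bool_irrelevance.
Qed.

Lemma coord_addE nu j i : coord (addE nu j) i = (coord nu i + (i == j))%N.
Proof. by rewrite /addE coord_mk nth_incr_nth addnC eq_sym. Qed.

Lemma coord_msub nu m i : coord (msub nu m) i = (coord nu i - coord m i)%N.
Proof.
rewrite /msub coord_mk.
case: (ltnP i (maxn (size (sval nu)) (size (sval m)))) => Hi.
  by rewrite (nth_map 0%N) ?size_iota // nth_iota.
rewrite nth_default ?size_map ?size_iota //.
rewrite /coord !nth_default //; move: Hi; rewrite geq_max => /andP[] //.
Qed.

Lemma coord_mzero i : coord mzero i = 0%N.
Proof. by rewrite /mzero coord_mk nth_nil. Qed.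

Lemma sumn_incr s j : sumn (incr_nth s j) = (sumn s).+1.
Proof.
elim: s j => [|a t IH] [|j] //=.
  by elim: j => [|j IHj] //=.
by rewrite IH addnS.
Qed.

Lemma mabs_addE nu j : mabs (addE nu j) = (mabs nu).+1.
Proof. by rewrite /addE mabs_mk sumn_incr. Qed.

Lemma mabs_mzero : mabs mzero = 0%N.
Proof. by []. Qed.

Lemma coord_le_mabs nu i : (coord nu i <= mabs nu)%N.
Proof.
rewrite /coord /mabs; case: nu => s _ /=.
elim: s i => [|a t IH] [|i] //=; first exact: leq_addr.
exact: leq_trans (IH i) (leq_addl _ _).
Qed.

Lemma mabs0 nu : mabs nu = 0%N -> nu = mzero.
Proof.
move=> H; apply: mi_ext => i; rewrite coord_mzero.
by have := coord_le_mabs nu i; rewrite H; lia.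
Qed.


Lemma has_pos s : (0 < sumn s)%N -> has (fun x => 0 < x)%N s.
Proof. elim: s => [|a t IH] //=; case: a => //= a' H; by rewrite IH. Qed.

Lemma mi_decomp m : m != mzero -> exists nu j, m = addE nu j.
Proof.
move=> Hm.
have Hpos : (0 < mabs m)%N.
  rewrite lt0n; apply/negP => /eqP H; move/eqP: Hm; apply; exact: mabs0.
have Hh := has_pos Hpos.
set j := find (fun x => 0 < x)%N (sval m).
have Hj : (0 < coord m j)%N by exact: (nth_find 0%N Hh).
have Hjs : (j < size (sval m))%N by rewrite -has_find.
exists (mk [seq (coord m i - (i == j))%N | i <- iota 0 (size (sval m))]), j.
apply: mi_ext => i; rewrite coord_addE coord_mk.
case: (ltnP i (size (sval m))) => Hi.
  rewrite (nth_map 0%N) ?size_iota // nth_iota // add0n.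
  case: eqP => [->|_]; last by rewrite !addn0 subn0.
  by rewrite subnK.
rewrite nth_default ?size_map ?size_iota //.
have -> : (i == j) = false by apply/negbTE; apply/eqP => E; subst; lia.
by rewrite /coord nth_default.
Qed.

Local Open Scope ring_scope.

Lemma mpowE (R : comRingType) (rho : nat -> R) nu N :
  (forall i, (N <= i)%N -> coord nu i = 0%N) ->
  mpow rho nu = \prod_(i < N) rho i ^+ coord nu i.
Proof.
move=> H; have Hs := canon_size H.
rewrite /mpow -!(big_mkord xpredT (fun i => rho i ^+ coord nu i)).
rewrite (big_cat_nat (leq0n _) Hs) /= [X in _ = _ * X]big_nat_cond.
rewrite [X in _ = _ * X]big1 ?mulr1 //.
move=> i /andP[/andP[Hi _] _]; by rewrite /coord nth_default.
Qed.

Definition SS (R : numFieldType) (n : nat) (g : nat -> R) : R :=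
  \sum_(i < n.+1) ('C(n, i))%:R * g i.

Lemma SS_pascal (R : numFieldType) n (g : nat -> R) :
  SS n.+1 g = SS n g + SS n (fun i => g i.+1).
Proof.
rewrite /SS big_ord_recl [in RHS]big_ord_recl /= !bin0.
rewrite (eq_bigr (fun i : 'I_n.+1 => ('C(n, i.+1))%:R * g i.+1 + ('C(n, i))%:R * g i.+1));
  last by move=> i _; rewrite /bump leq0n add1n binS natrD mulrDl.
rewrite big_split /= addrA; congr (_ + _); congr (_ + _).
by rewrite big_ord_recr /= bin_small ?mul0r ?addr0.
Qed.

Lemma SS_conv (R : numFieldType) a T (g : nat -> R) :
  \sum_(i < a.+1) ('C(a, i))%:R * SS T (fun k => g (i + k)%N) = SS (a + T) g.
Proof.
elim: a g => [|a IH] g.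
  rewrite big_ord1 bin0 mul1r add0n /SS; apply: eq_bigr => i _; by rewrite add0n.
transitivity (SS a.+1 (fun i => SS T (fun k => g (i + k)%N))); first by [].
rewrite SS_pascal.
have -> : SS a (fun i => SS T (fun k => g (i + k)%N)) = SS (a + T) g by rewrite -IH.
have -> : SS a (fun i => SS T (fun k => g (i.+1 + k)%N)) = SS (a + T) (fun x => g x.+1).
  rewrite -IH /SS; apply: eq_bigr => i _; congr (_ * _); apply: eq_bigr => k _; by rewrite addSn.
by rewrite addSn SS_pascal.
Qed.

Definition binprod (s u : seq nat) : nat :=
  (\prod_(j < size s) 'C(nth 0%N s j, nth 0%N u j))%N.

Lemma VdM (R : numFieldType) s (g : nat -> R) :
  \sum_(u <- below s) (binprod s u)%:R * g (sumn u) = SS (sumn s) g.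
Proof.
elim: s g => [|a t IH] g.
  by rewrite /= big_seq1 /binprod big_ord0 /SS big_ord1 /= bin0.
rewrite (_ : below (a :: t) = [seq i :: u | i <- iota 0 a.+1, u <- below t]) // big_allpairs_dep.
rewrite (_ : iota 0 a.+1 = index_iota 0 a.+1); last by rewrite /index_iota subn0.
rewrite big_mkord.
rewrite -SS_conv; apply: eq_bigr => i _.
rewrite -IH mulr_sumr; apply: eq_bigr => u _.
rewrite /binprod /= big_ord_recl /= natrM -mulrA.
congr (_ * (_ * _)); apply: congr1; apply: eq_bigr => k _; by [].
Qed.

Lemma below_prop s u : u \in below s ->
  size u = size s /\ forall i, (nth 0%N u i <= nth 0%N s i)%N.
Proof.
elim: s u => [|a t IH] u.
  by rewrite /= inE => /eqP ->; split => // i; rewrite nth_nil.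
rewrite (_ : below (a :: t) = [seq i :: u | i <- iota 0 a.+1, u <- below t]) //.
move/allpairsPdep => [i [v [Hi Hv ->]]].
have [Hs Hn] := IH _ Hv.
split; first by rewrite /= Hs.
case=> [|k] /=; last exact: Hn.
by move: Hi; rewrite mem_iota add0n ltnS.
Qed.

Lemma prod_delta (R : comRingType) (rho : nat -> R) N j : (j < N)%N ->
  \prod_(i < N) rho i ^+ (nat_of_ord i == j) = rho j.
Proof.
move=> Hj; rewrite (bigD1 (Ordinal Hj)) //= eqxx expr1 big1 ?mulr1 //.
move=> i Hi; rewrite (_ : (i == j :> nat) = false) ?expr0 //.
apply/negbTE; apply: contra Hi => /eqP E; apply/eqP; exact: val_inj.
Qed.

Lemma mpow_addE (R : comRingType) (rho : nat -> R) nu j :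
  mpow rho (addE nu j) = mpow rho nu * rho j.
Proof.
set N := maxn (size (sval nu)) j.+1.
have Hn : forall i, (N <= i)%N -> coord nu i = 0%N.
  by move=> i; rewrite geq_max => /andP[H _]; rewrite /coord nth_default.
rewrite (@mpowE _ rho _ N); last first.
  move=> i Hi; rewrite coord_addE Hn //.
  by move: Hi; rewrite geq_max => /andP[_ H]; rewrite add0n; apply/eqP; lia.
rewrite (@mpowE _ rho _ N Hn) -(@prod_delta _ rho N j); last by rewrite leq_maxr.
rewrite -big_split /=; apply: eq_bigr => i _; by rewrite coord_addE exprD.
Qed.

Lemma mpow_split (R : comRingType) (rho : nat -> R) nu j u : u \in below (sval nu) ->
  mpow rho (addE (msub nu (mk u)) j) * mpow rho (mk u) = mpow rho nu * rho j.
Proof.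
move=> /below_prop [Hs Hle].
set N := maxn (size (sval nu)) j.+1.
have Hn : forall i, (N <= i)%N -> coord nu i = 0%N.
  by move=> i; rewrite geq_max => /andP[H _]; rewrite /coord nth_default.
have Hu : forall i, (N <= i)%N -> coord (mk u) i = 0%N.
  by move=> i; rewrite geq_max => /andP[H _]; rewrite coord_mk nth_default ?Hs.
rewrite (@mpowE _ rho _ N); last first.
  move=> i Hi; rewrite coord_addE coord_msub Hn // Hu //.
  by move: Hi; rewrite geq_max => /andP[_ H]; apply/eqP; lia.
rewrite (@mpowE _ rho _ N Hu) (@mpowE _ rho _ N Hn).
rewrite -(@prod_delta _ rho N j); last by rewrite leq_maxr.
rewrite -!big_split /=; apply: eq_bigr => i _.
rewrite coord_addE coord_msub coord_mk -!exprD; congr (_ ^+ _).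
have := Hle i; rewrite /coord; lia.
Qed.

Lemma mpow_ge0 (R : realFieldType) (rho : nat -> R) nu :
  (forall j, 0 <= rho j) -> 0 <= mpow rho nu.
Proof. move=> H; rewrite /mpow; apply: prodr_ge0 => i _; exact: exprn_ge0. Qed.

Definition Bexp (R : realFieldType) (c : R) (rho : nat -> R) (m : mi) (l : nat) : R :=
  c ^+ l * mpow rho m * HH R l (mabs m).

Lemma KEY (R : realFieldType) (c : R) (rho : nat -> R) nu j lam : (0 < lam)%N ->
  \sum_(m <- mbelow nu)
      (mbinom nu m)%:R * c * mpow rho (addE (msub nu m) j) *
      ((mabs nu - mabs m + 2)`!)%:R * Bexp c rho m lam.-1
  = Bexp c rho (addE nu j) lam.
Proof.
case: lam => [|l] // _ /=.
rewrite /mbelow big_map big_seq.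
set s := sval nu.
transitivity (\sum_(u <- below s | u \in below s) (c ^+ l.+1 * (mpow rho nu * rho j)) *
   ((binprod s u)%:R * (((sumn s - sumn u + 2)`!)%:R * HH R l (sumn u)))).
  apply: eq_bigr => u Hu.
  have E := mpow_split rho j Hu.
  have [Hs _] := below_prop Hu.
  have -> : mbinom nu (mk u) = binprod s u.
    rewrite /mbinom /binprod (maxn_idPl _); last by rewrite -Hs trim_size.
    by apply: eq_bigr => k _; rewrite coord_mk.
  rewrite /Bexp mabs_mk -/(mabs nu) -E exprS.
  rewrite /mabs -/s; ring.
rewrite -big_seq -mulr_sumr (VdM s (fun i => ((sumn s - i + 2)`!)%:R * HH R l i)) /SS KI /Bexp mabs_addE mpow_addE.
by rewrite /mabs -/s; ring.
Qed.

Lemma mpow_mzero (R : comRingType) (rho : nat -> R) : mpow rho mzero = 1.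
Proof. by rewrite /mpow big_ord0. Qed.

Lemma Bexp0 (R : realFieldType) (c : R) rho m : Bexp c rho m 0 = (m == mzero)%:R.
Proof.
rewrite /Bexp HH0 expr0 mul1r.
case: (eqVneq m mzero) => [->|Hm]; first by rewrite mpow_mzero mabs_mzero eqxx mulr1.
case: (eqVneq (mabs m) 0%N) => [/mabs0 H|_]; first by move/eqP: Hm.
by rewrite mulr0.
Qed.

Lemma BexpZ (R : realFieldType) (c : R) rho m l : (mabs m < l)%N -> Bexp c rho m l = 0.
Proof. by move=> H; rewrite /Bexp HHvanish ?mulr0. Qed.

Lemma MAIN_le (R : realFieldType) (c : R) (rho : nat -> R) :
  0 < c -> (forall j, 0 <= rho j) ->
  forall A : mi -> nat -> R,
     (forall nu, A nu 0%N = (nu == mzero)%:R) ->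
     (forall nu lam, (mabs nu < lam)%N -> A nu lam = 0) ->
     (forall nu j lam, (0 < lam)%N -> (lam <= mabs (addE nu j))%N ->
        A (addE nu j) lam <= \sum_(m <- mbelow nu)
      (mbinom nu m)%:R * c * mpow rho (addE (msub nu m) j) *
      ((mabs nu - mabs m + 2)`!)%:R * A m lam.-1) ->
     forall l m, A m l <= Bexp c rho m l.
Proof.
move=> hc hr A h0 hz hrec l; elim: l => [|l IH] m.
  by rewrite h0 Bexp0.
case: (ltnP (mabs m) l.+1) => Hm; first by rewrite hz // BexpZ.
have Hnz : m != mzero.
  by apply/eqP => E; move: Hm; rewrite E mabs_mzero.
have [nu [j E]] := mi_decomp Hnz; subst m.
apply: le_trans (hrec _ _ _ (ltn0Sn _) Hm) _.
rewrite -KEY //; apply: ler_sum => m _ /=.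
apply: ler_wpM2l; last exact: IH.
apply: mulr_ge0; last exact: ler0n.
apply: mulr_ge0; last exact: mpow_ge0.
apply: mulr_ge0; [exact: ler0n | exact: ltW].
Qed.

Lemma MAIN_eq (R : realFieldType) (c : R) (rho : nat -> R) :
  forall A : mi -> nat -> R,
     (forall nu, A nu 0%N = (nu == mzero)%:R) ->
     (forall nu lam, (mabs nu < lam)%N -> A nu lam = 0) ->
     (forall nu j lam, (0 < lam)%N -> (lam <= mabs (addE nu j))%N ->
        A (addE nu j) lam = \sum_(m <- mbelow nu)
      (mbinom nu m)%:R * c * mpow rho (addE (msub nu m) j) *
      ((mabs nu - mabs m + 2)`!)%:R * A m lam.-1) ->
     forall l m, A m l = Bexp c rho m l.
Proof.
move=> A h0 hz hrec l; elim: l => [|l IH] m.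
  by rewrite h0 Bexp0.
case: (ltnP (mabs m) l.+1) => Hm; first by rewrite hz // BexpZ.
have Hnz : m != mzero.
  by apply/eqP => E; move: Hm; rewrite E mabs_mzero.
have [nu [j E]] := mi_decomp Hnz; subst m.
rewrite (hrec _ _ _ (ltn0Sn _) Hm) -KEY //; apply: eq_bigr => m _ /=.
by rewrite IH.
Qed.

Lemma Bexp_rhs (R : realFieldType) (c : R) (rho : nat -> R) nu lam :
  (1 <= lam)%N -> (lam <= mabs nu)%N ->
  Bexp c rho nu lam = c ^+ lam * mpow rho nu *
    \sum_(1 <= k < lam.+1)
      (-1) ^+ (lam + k) * ((mabs nu + 2 * k - 1)`!)%:R /
      (((2 * k - 1)`!)%:R * ((lam - k)`!)%:R * (k`!)%:R).
Proof. move=> H1 H2; rewrite /Bexp HHrhs //; lia. Qed.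

Theorem mainTheorem9 (R : realFieldType) (c : R) (rho : nat -> R) :
  0 < c -> (forall j, 0 <= rho j) ->
  let rhs (nu : mi) (lam : nat) : R :=
    c ^+ lam * mpow rho nu *
    \sum_(1 <= k < lam.+1)
      (-1) ^+ (lam + k) * ((mabs nu + 2 * k - 1)`!)%:R /
      (((2 * k - 1)`!)%:R * ((lam - k)`!)%:R * (k`!)%:R) in
  let recsum (A : mi -> nat -> R) (nu : mi) (j lam : nat) : R :=
    \sum_(m <- mbelow nu)
      (mbinom nu m)%:R * c * mpow rho (addE (msub nu m) j) *
      ((mabs nu - mabs m + 2)`!)%:R * A m lam.-1 in
  (forall A : mi -> nat -> R,
     (forall nu, A nu 0%N = (nu == mzero)%:R) ->
     (forall nu lam, (mabs nu < lam)%N -> A nu lam = 0) ->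
     (forall nu j lam, (0 < lam)%N -> (lam <= mabs (addE nu j))%N ->
        A (addE nu j) lam <= recsum A nu j lam) ->
     forall nu lam, nu != mzero -> (1 <= lam)%N -> (lam <= mabs nu)%N ->
       A nu lam <= rhs nu lam)
  /\
  (forall A : mi -> nat -> R,
     (forall nu, A nu 0%N = (nu == mzero)%:R) ->
     (forall nu lam, (mabs nu < lam)%N -> A nu lam = 0) ->
     (forall nu j lam, (0 < lam)%N -> (lam <= mabs (addE nu j))%N ->
        A (addE nu j) lam = recsum A nu j lam) ->
     forall nu lam, nu != mzero -> (1 <= lam)%N -> (lam <= mabs nu)%N ->
       A nu lam = rhs nu lam).
Proof.
move=> hc hr rhs recsum; split.
  move=> A h0 hz hrec nu lam _ H1 H2.
  rewrite /rhs -Bexp_rhs //; exact: (MAIN_le hc hr h0 hz hrec).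
move=> A h0 hz hrec nu lam _ H1 H2.
rewrite /rhs -Bexp_rhs //; exact: (MAIN_eq h0 hz hrec).
Qed.
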